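(* Let $i(x,y)=\frac{y^{2}}{x}\bullet y$. Every rational projective plane flow $\phi$ of level $0$ which is $i$-symmetric (i.e. $i\circ\phi\circ i=\phi$) can be obtained by the following construction: take a rational function $r(t)$ with $r(t)=r(1/t)$, set $J(x,y)=y\,r\big(\frac{x}{y}\big)$, and $$\phi(x,y)=\frac{x}{1-J(x,y)}\bullet\frac{y}{1-J(x,y)}.$$
   Context: Notation: $a\bullet b$ denotes the pair $(a,b)$. A projective plane flow is a pair $\phi=u\bullet v$ satisfying $(1-z)\phi(\mathbf{x})=\phi\big(\phi(\mathbf{x}z)\frac{1-z}{z}\big)$, $\mathbf x=(x,y)$, with $\lim_{z\to0}u(xz,yz)/z=x$, $\lim_{z\to0}v(xz,yz)/z=y$; its vector field is $\varpi\bullet\varrho$ with $\varpi=\frac{d}{dz}\frac{u(xz,yz)}{z}|_{z=0}$, $\varrho=\frac{d}{dz}\frac{v(xz,yz)}{z}|_{z=0}$. It is rational if $u,v$ are rational functions. A rational flow has level $0$ if $x\varrho-y\varpi\equiv0$; these are exactly the flows $\frac{x}{1-J(x,y)}\bullet\frac{y}{1-J(x,y)}$ with $J$ a rational $1$-homogeneous function (vector field $xJ\bullet yJ$). *)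

(* Defs.v *)
From HB Require Import structures.
From mathcomp Require Import all_boot all_order all_algebra.
From mathcomp Require Import all_classical all_reals all_analysis.
Set Implicit Arguments. Unset Strict Implicit. Unset Printing Implicit Defensive.
Import Order.TTheory GRing.Theory Num.Theory.
Import numFieldNormedType.Exports.
Local Open Scope ring_scope.
Local Open Scope classical_set_scope.

Section Defs.
Variable R : realType.

(* Evaluation of polynomials in 1, 2, 3 variables (x innermost). *)
Definition ev2 (p : {poly {poly R}}) (x y : R) : R := (p.[y%:P]).[x].
Definition ev3 (p : {poly {poly {poly R}}}) (x y z : R) : R :=
  ((p.[(z%:P)%:P]).[y%:P]).[x].

Definition generic1 (P : R -> Prop) : Prop :=
  exists D : {poly R}, D != 0 /\ forall t, D.[t] != 0 -> P t.
Definition generic2 (P : R -> R -> Prop) : Prop :=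
  exists D : {poly {poly R}}, D != 0 /\ forall x y, ev2 D x y != 0 -> P x y.
Definition generic3 (P : R -> R -> R -> Prop) : Prop :=
  exists D : {poly {poly {poly R}}}, D != 0 /\
    forall x y z, ev3 D x y z != 0 -> P x y z.

(* Rational functions, represented by (total) real functions which agree with
   P/Q wherever the denominator Q does not vanish. *)
Definition rational1 (r : R -> R) : Prop :=
  exists p q : {poly R}, q != 0 /\ forall t, q.[t] != 0 -> r t = p.[t] / q.[t].
Definition rational2 (u : R -> R -> R) : Prop :=
  exists P Q : {poly {poly R}}, Q != 0 /\
    forall x y, ev2 Q x y != 0 -> u x y = ev2 P x y / ev2 Q x y.

(* Projective plane flow phi = u • v:
   (1-z) phi(x) = phi( phi(xz) (1-z)/z )  (as an identity of rational functions),
   and lim_{z->0} u(xz,yz)/z = x, lim_{z->0} v(xz,yz)/z = y. *)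
Definition projective_flow (u v : R -> R -> R) : Prop :=
  generic3 (fun x y z =>
    let a := u (x * z) (y * z) * (1 - z) / z in
    let b := v (x * z) (y * z) * (1 - z) / z in
    (1 - z) * u x y = u a b /\ (1 - z) * v x y = v a b)
  /\ generic2 (fun x y =>
    (fun z => u (x * z) (y * z) / z) @ 0^' --> x /\
    (fun z => v (x * z) (y * z) / z) @ 0^' --> y).

Definition rational_flow (u v : R -> R -> R) : Prop :=
  rational2 u /\ rational2 v /\ projective_flow u v.

(* z |-> f(xz,yz)/z, extended at z = 0 by its limit c. *)
Definition extf (f : R -> R -> R) (c x y : R) : R -> R :=
  fun z => if z == 0 then c else f (x * z) (y * z) / z.

(* Level 0: the vector field varpi • rho, with
   varpi = d/dz (u(xz,yz)/z)|_{z=0}, rho = d/dz (v(xz,yz)/z)|_{z=0},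
   satisfies x rho - y varpi = 0 identically. *)
Definition level0 (u v : R -> R -> R) : Prop :=
  generic2 (fun x y => exists varpi rho : R,
    is_derive (0 : R) (1 : R) (extf u x x y) varpi /\
    is_derive (0 : R) (1 : R) (extf v y x y) rho /\
    x * rho - y * varpi = 0).

Definition i_symmetric (u v : R -> R -> R) : Prop :=
  generic2 (fun x y =>
    let a := y ^+ 2 / x in let b := y in
    (v a b) ^+ 2 / u a b = u x y /\ v a b = v x y).

End Defs.

(* Main.v *)
Require Import Defs.
From HB Require Import structures.
From mathcomp Require Import all_boot all_order all_algebra.
From mathcomp Require Import all_classical all_reals all_analysis.
From mathcomp Require Import ring lra.
Import Order.TTheory GRing.Theory Num.Theory.
Import numFieldNormedType.Exports.
Local Open Scope ring_scope.

Module Helpers.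
Set Implicit Arguments. Unset Strict Implicit. Unset Printing Implicit Defensive.
Local Open Scope classical_set_scope.

Ltac fld := field; try (repeat (apply/andP; split)); try done.

Section PolyA.
Variable R : realType.
Implicit Types (P Q : {poly {poly R}}) (p q : {poly R}).

Lemma ev2E P a b : ev2 P a b = \sum_(i < size P) (P`_i).[a] * b ^+ i.
Proof.
rewrite /ev2 (horner_coef P) horner_sum; apply: eq_bigr => i _.
by rewrite hornerM -rmorphXn hornerC.
Qed.

Lemma ev2M P Q a b : ev2 (P * Q) a b = ev2 P a b * ev2 Q a b.
Proof. by rewrite /ev2 !hornerM. Qed.

Lemma ev2X a b : ev2 (R:=R) 'X a b = b.
Proof. by rewrite /ev2 hornerX hornerC. Qed.

Lemma ev2Xi a b : ev2 (R:=R) ('X%:P) a b = a.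
Proof. by rewrite /ev2 hornerC hornerX. Qed.

Lemma ev2C (c : R) a b : ev2 (c%:P%:P) a b = c.
Proof. by rewrite /ev2 !hornerC. Qed.

Lemma ev2B P Q a b : ev2 (P - Q) a b = ev2 P a b - ev2 Q a b.
Proof. by rewrite /ev2 !hornerE. Qed.

Lemma ev2_map P a b : ev2 P a b = (map_poly (horner_eval a) P).[b].
Proof.
have -> : b = horner_eval a (b%:P) by rewrite /horner_eval hornerC.
by rewrite horner_map /= /horner_eval hornerC.
Qed.

Definition ray P (x y : R) : {poly R} :=
  \sum_(i < size P) (P`_i \Po (x *: 'X)) * (y *: 'X) ^+ i.

Lemma rayE P x y t : (ray P x y).[t] = ev2 P (t * x) (t * y).
Proof.
rewrite ev2E /ray horner_sum; apply: eq_bigr => i _.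
by rewrite hornerM horner_comp horner_exp !hornerZ hornerX !(mulrC t).
Qed.

Lemma ev3E (A3 : {poly {poly {poly R}}}) x y z : ev3 A3 x y z = \sum_(i < size A3) ev2 A3`_i x y * z ^+ i.
Proof.
rewrite /ev3 (horner_coef A3) !horner_sum; apply: eq_bigr => i _.
by rewrite /ev2 !hornerM -!rmorphXn !hornerC.
Qed.

Lemma ev3M (A B : {poly {poly {poly R}}}) x y z :
  ev3 (A * B) x y z = ev3 A x y z * ev3 B x y z.
Proof. by rewrite /ev3 !hornerM. Qed.

Lemma ev3_XsubC1 x y z : ev3 (R:=R) ('X - 1%:P) x y z = z - 1.
Proof. by rewrite /ev3 !hornerE. Qed.

Lemma ev3_1 (A : {poly {poly {poly R}}}) x y : ev3 A x y 1 = ev2 A.[1] x y.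
Proof. by []. Qed.

Lemma ev3_exp (A : {poly {poly {poly R}}}) n x y z :
  ev3 (A ^+ n) x y z = ev3 A x y z ^+ n.
Proof. by rewrite /ev3 !horner_exp. Qed.

Definition hom (N : nat) p : {poly {poly R}} :=
  \sum_(j < N) (p`_j *: 'X^j)%:P * 'X^(N - j).

Lemma homE N p x y : (size p <= N)%N -> y != 0 ->
  ev2 (hom N p) x y = y ^+ N * p.[x / y].
Proof.
move=> sp y0; rewrite (horner_coef_wide _ sp) mulr_sumr /hom /ev2 !horner_sum.
apply: eq_bigr => j _.
rewrite !hornerE exprMn exprVn.
rewrite -[X in y ^+ X](subnK (ltnW (ltn_ord j))) exprD.
change (p`_j * x ^+ j * y ^+ (N - j) = (y ^+ (N - j) * y ^+ j) * p`_j * (x ^+ j / y ^+ j)).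
have yj : y ^+ j != 0 by exact: expf_neq0.
by field.
Qed.

Definition revp (N : nat) p : {poly R} := \sum_(j < N) p`_j *: 'X^(N - j).

Lemma revpE N p t : (size p <= N)%N -> t != 0 -> (revp N p).[t] = t ^+ N * p.[t^-1].
Proof.
move=> sp t0; rewrite (horner_coef_wide _ sp) mulr_sumr /revp !horner_sum.
apply: eq_bigr => j _.
rewrite !hornerE exprVn.
rewrite -[X in t ^+ X](subnK (ltnW (ltn_ord j))) exprD.
change (p`_j * t ^+ (N - j) = (t ^+ (N - j) * t ^+ j) * p`_j * (t ^+ j)^-1).
have tj : t ^+ j != 0 by exact: expf_neq0.
by field.
Qed.

End PolyA.

Section PolyB.
Variable R : realType.
Implicit Types (P Q : {poly {poly R}}) (p q : {poly R}).

Lemma dnbhs_right (P : R -> Prop) (a : R) :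
  (\forall t \near a^', P t) -> \forall t \near a^'+, P t.
Proof.
rewrite !near_withinE => H; apply: filterS H => t Ht ta; apply: Ht.
by rewrite /= gt_eqF.
Qed.

Lemma poly_nz_near p (a : R) : p != 0 -> \forall t \near a^', p.[t] != 0.
Proof.
move=> p0; have [m [q /implyP/(_ p0) qa ->]] := multiplicity_XsubC p a.
have hq : \forall t \near a, q.[t] != 0.
  have := @cvgr_neq0 _ _ _ _ _ (horner q) _ (@continuous_horner _ q a) qa; exact.
near=> t.
rewrite hornerM horner_exp hornerXsubC mulf_neq0 ?expf_neq0 //.
  by near: t; apply: cvg_within.
rewrite subr_eq0; near: t; exact: nbhs_dnbhs_neq.
Unshelve. all: by end_near. Qed.

Lemma poly_vanish p (a : R) : (\forall t \near a^'+, p.[t] = 0) -> p = 0.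
Proof.
move=> H; apply/eqP; apply/negP => /negP p0.
have H' := dnbhs_right (poly_nz_near a p0).
have : \forall t \near a^'+, False.
  by apply: filterS (filterI H H') => t [-> /eqP].
by move/filter_ex => [].
Qed.

Lemma poly_ex_nz p : p != 0 -> exists t, p.[t] != 0.
Proof.
move=> p0; have := dnbhs_right (poly_nz_near 0 p0).
by move/filter_ex => [t ?]; exists t.
Qed.

Lemma poly2_ex_nz P : P != 0 -> exists x y, ev2 P x y != 0.
Proof.
move=> P0; have lc : lead_coef P != 0 by rewrite lead_coef_eq0.
have [x hx] := poly_ex_nz lc.
set q := map_poly (horner_eval x) P.
have q0 : q != 0.
  apply/eqP => q0; move: hx; rewrite lead_coefE.
  have -> : (P`_(size P).-1).[x] = q`_(size P).-1 by rewrite coef_map.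
  by rewrite q0 coef0 eqxx.
have [y hy] := poly_ex_nz q0.
by exists x, y; rewrite ev2_map.
Qed.

Lemma ev2_cvg {T : Type} (F : set_system T) {FF : Filter F} P
    (f g : T -> R) (a b : R) :
  f @ F --> a -> g @ F --> b ->
  (fun t => ev2 P (f t) (g t)) @ F --> ev2 P a b.
Proof.
move=> fa gb; rewrite ev2E.
have -> : (fun t => ev2 P (f t) (g t)) =
   (fun t => \sum_(i < size P) (P`_i).[f t] * g t ^+ i).
  by apply/funext => t; rewrite ev2E.
apply: cvg_big => //; first exact: add_continuous.
move=> i _; apply: cvgM.
  exact: (continuous_cvg _ (@continuous_horner _ P`_i a) fa).
exact: (continuous_cvg _ (@exprn_continuous _ _ _) gb).
Qed.

Lemma ev3_cvg {T : Type} (F : set_system T) {FF : Filter F}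
    (A3 : {poly {poly {poly R}}}) (f g h : T -> R) (a b c : R) :
  f @ F --> a -> g @ F --> b -> h @ F --> c ->
  (fun t => ev3 A3 (f t) (g t) (h t)) @ F --> ev3 A3 a b c.
Proof.
move=> fa gb hc; rewrite ev3E.
have -> : (fun t => ev3 A3 (f t) (g t) (h t)) =
   (fun t => \sum_(i < size A3) ev2 A3`_i (f t) (g t) * h t ^+ i).
  by apply/funext => t; rewrite ev3E.
apply: cvg_big => //; first exact: add_continuous.
move=> i _; apply: cvgM; first exact: ev2_cvg.
exact: (continuous_cvg _ (@exprn_continuous _ _ _) hc).
Qed.

Lemma near_right_itv (P : R -> Prop) (a : R) :
  (\forall t \near a^'+, P t) -> exists2 d, 0 < d & forall t, a < t < a + d -> P t.
Proof.
rewrite near_withinE => /nbhs_ballP [d /= d0 H]; exists d => // t /andP[lt1 td].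
apply: H => //; rewrite -ball_normE /= ltr_distlC; apply/andP; split; lra.
Qed.

End PolyB.

Section AnaC.
Variable R : realType.

Lemma is_derive_uniq (f : R -> R) (x : R) a b :
  is_derive x 1 f a -> is_derive x 1 f b -> a = b.
Proof. by move=> [_ <-] [_ <-]. Qed.

Lemma const_on_itv (f : R -> R) (d : R) :
  (forall t, 0 < t < d -> is_derive t 1 f 0) ->
  forall a b, 0 < a < d -> 0 < b < d -> f a = f b.
Proof.
move=> Hd a b.
wlog ab : a b / a <= b.
  move=> W ha hb; case: (leP a b) => [/W|/ltW /W]; first exact.
  by move=> H; apply/esym/H.
move=> /andP[a0 ad] /andP[b0 bd].
have [||c _ E] := @MVT_segment R f (fun _ => 0) a b ab.
- move=> t; rewrite in_itv /= => /andP[at1 tb]; apply: Hd; apply/andP; split; lra.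
- apply: derivable_within_continuous => t; rewrite in_itv /= => /andP[at1 tb].
  have : 0 < t < d by apply/andP; split; lra.
  by move/Hd => [].
by apply/eqP; rewrite eq_sym -subr_eq0 E mul0r.
Qed.

Lemma const_lim (f : R -> R) (d L : R) :
  (forall t, 0 < t < d -> is_derive t 1 f 0) ->
  f @ 0^'+ --> L -> forall t, 0 < t < d -> f t = L.
Proof.
move=> Hd fL t0 ht0.
have H : \forall t \near 0^'+, f t = f t0.
  have d0 : 0 < d by case/andP: ht0 => ? ?; lra.
  near=> t; apply: (const_on_itv Hd) => //; apply/andP; split.
    by near: t; exact: nbhs_right_gt.
  by near: t; exact: nbhs_right_lt.
have H2 : f @ 0^'+ --> f t0 by apply: cvg_near_cst.
exact: (cvg_unique _ H2 fL).
Unshelve. all: by end_near. Qed.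

Lemma cvg_dnbhs_right (f : R -> R) (a l : R) :
  f @ a^' --> l -> f @ a^'+ --> l.
Proof. by move=> H A /H; exact: dnbhs_right. Qed.

Lemma itv_near_right (P : R -> Prop) (d : R) : 0 < d ->
  (forall t, 0 < t < d -> P t) -> \forall t \near 0^'+, P t.
Proof.
move=> d0 H; near=> t; apply: H; apply/andP; split.
  by near: t; exact: nbhs_right_gt.
by near: t; exact: nbhs_right_lt.
Unshelve. all: by end_near. Qed.

Lemma near_right_itv0 (P : R -> Prop) :
  (\forall t \near 0^'+, P t) -> exists2 d, 0 < d & forall t, 0 < t < d -> P t.
Proof.
move/near_right_itv => [d d0 H]; exists d => // t ht; apply: H; by rewrite add0r.
Qed.

Lemma derive_transfer (F g : R -> R) (t d : R) :
  is_derive (0:R) (1:R) g d -> g 0 = F t ->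
  (\forall s \near 0^', F (t + s) = g s) -> is_derive t (1:R) F d.
Proof.
move=> Hg g0 H.
have Hc : is_derive t (1:R) (g \o shift (- t)) (d * 1).
  apply: is_derive1_comp; last exact: is_derive_shift.
  by rewrite /= subrr.
rewrite mulr1 in Hc; apply: near_eq_is_derive Hc.
rewrite near_withinE in H.
apply/nbhs0P; near=> e => /=.
rewrite (addrC t e) addrK.
have [->|e0] := eqVneq e 0; first by rewrite add0r.
rewrite addrC; move: e0; near: e; apply: filterS H => e He e0.
by rewrite He.
Unshelve. all: by end_near. Qed.

End AnaC.


Section Core.
Variable R : realType.
Variables (u v : R -> R -> R) (P Q P' Q' DL D0 : {poly {poly R}})
  (D3q : {poly {poly {poly R}}}).
Hypothesis Hu : forall x y, ev2 Q x y != 0 -> u x y = ev2 P x y / ev2 Q x y.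
Hypothesis Hv : forall x y, ev2 Q' x y != 0 -> v x y = ev2 P' x y / ev2 Q' x y.
Hypothesis Hflow : forall x y z, z != 1 -> ev3 D3q x y z != 0 ->
    let a := u (x * z) (y * z) * (1 - z) / z in
    let b := v (x * z) (y * z) * (1 - z) / z in
    (1 - z) * u x y = u a b /\ (1 - z) * v x y = v a b.
Hypothesis Hlim : forall x y, ev2 DL x y != 0 ->
    (fun z => u (x * z) (y * z) / z) @ 0^' --> x /\
    (fun z => v (x * z) (y * z) / z) @ 0^' --> y.
Hypothesis Hlev : forall x y, ev2 D0 x y != 0 -> exists varpi rho : R,
    is_derive (0 : R) (1 : R) (extf u x x y) varpi /\
    is_derive (0 : R) (1 : R) (extf v y x y) rho /\
    x * rho - y * varpi = 0.

Section Point.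
Variables (x y : R).
Hypotheses (x0 : x != 0) (hL : ev2 DL x y != 0) (h0 : ev2 D0 x y != 0)
  (h3 : ev2 D3q.[1] x y != 0) (hQ : ev2 Q x y != 0) (hQ' : ev2 Q' x y != 0).

Let G1 t := u (x * t) (y * t) / t.
Let G2 t := v (x * t) (y * t) / t.

Let limG1 : G1 @ 0^' --> x. Proof. exact: (Hlim hL).1. Qed.
Let limG2 : G2 @ 0^' --> y. Proof. exact: (Hlim hL).2. Qed.

Let ray_nz (S : {poly {poly R}}) : ev2 S x y != 0 ->
  \forall t \near 0^'+, ev2 S (x * t) (y * t) != 0.
Proof.
move=> hS; have rS : ray S x y != 0.
  by apply/eqP => E; move: hS; rewrite -(mul1r x) -(mul1r y) -rayE E horner0 eqxx.
have := dnbhs_right (poly_nz_near 0 rS); apply: filterS => t.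
by rewrite rayE (mulrC t x) (mulrC t y).
Qed.

Lemma S1 : exists2 d, 0 < d & forall t, 0 < t < d ->
  [/\ G1 t != 0, ev2 D0 (G1 t) (G2 t) != 0, ev2 D3q.[1] (x * t) (y * t) != 0,
      ev2 Q (x * t) (y * t) != 0 & ev2 Q' (x * t) (y * t) != 0].
Proof.
apply: near_right_itv0; near=> t; split.
- near: t; apply: dnbhs_right; exact: (cvgr_neq0 _ limG1 x0).
- near: t; apply: dnbhs_right; exact: (cvgr_neq0 _ (ev2_cvg (P:=D0) limG1 limG2) h0).
- by near: t; exact: ray_nz.
- by near: t; exact: ray_nz.
- by near: t; exact: ray_nz.
Unshelve. all: by end_near. Qed.

Lemma S2 t : 0 < t -> ev2 D3q.[1] (x * t) (y * t) != 0 ->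
  \forall s \near 0^', G1 (t + s) = u (G1 t * s) (G2 t * s) / s /\
                       G2 (t + s) = v (G1 t * s) (G2 t * s) / s.
Proof.
move=> t0 hD; have tn0 : t != 0 by rewrite gt_eqF.
have limts : (fun s : R => t + s) @ (0 : R) --> t.
  rewrite -[X in _ --> X]addr0; apply: cvgD; [exact: cvg_cst | exact: cvg_id].
have lim1 : (fun s : R => (t + s) * x) @ (0 : R) --> t * x.
  by apply: cvgM => //; exact: cvg_cst.
have lim2 : (fun s : R => (t + s) * y) @ (0 : R) --> t * y.
  by apply: cvgM => //; exact: cvg_cst.
have lim3 : (fun s : R => t / (t + s)) @ (0 : R) --> (1 : R).
  rewrite -(divff tn0); apply: cvgM; first exact: cvg_cst.
  exact: cvgV.
have hnz := cvgr_neq0 _ (ev3_cvg lim1 lim2 lim3)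
  (_ : ev3 D3q (t * x) (t * y) 1 != 0).
have hts := cvgr_neq0 _ limts tn0.
near=> s.
have s0 : s != 0 by near: s; exact: nbhs_dnbhs_neq.
have ts0 : t + s != 0 by near: s; apply: cvg_within; exact: hts.
have Hn : ev3 D3q ((t + s) * x) ((t + s) * y) (t / (t + s)) != 0.
  by near: s; apply: cvg_within; apply: hnz; rewrite ev3_1 (mulrC t x) (mulrC t y).
set z := t / (t + s) in Hn *.
have z1 : z != 1.
  apply/eqP => E; have := divfK ts0 t; rewrite -/z E mul1r => E2.
  by move/eqP: s0; apply; lra.
have := Hflow z1 Hn; move=> /= [E1 E2].
have hxz : (t + s) * x * z = x * t by rewrite /z; field.
have hyz : (t + s) * y * z = y * t by rewrite /z; field.
rewrite hxz hyz in E1 E2.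
have ha : u (x * t) (y * t) * (1 - z) / z = G1 t * s by rewrite /G1 /z; field; rewrite tn0 ts0.
have hb : v (x * t) (y * t) * (1 - z) / z = G2 t * s by rewrite /G2 /z; field; rewrite tn0 ts0.
rewrite -ha -hb -E1 -E2 /G1 /G2 !(mulrC x) !(mulrC y) /z; split; field; rewrite ?tn0 ?ts0 ?s0.
Unshelve. all: by end_near. Qed.

Lemma S3 t : 0 < t -> ev2 D0 (G1 t) (G2 t) != 0 -> ev2 D3q.[1] (x * t) (y * t) != 0 ->
  exists w r, [/\ is_derive t (1:R) G1 w, is_derive t (1:R) G2 r,
     G1 t * r - G2 t * w = 0 & is_derive (0:R) (1:R) (extf u (G1 t) (G1 t) (G2 t)) w].
Proof.
move=> t0 hD0 hD.
have [w [r [Hw [Hr Hwr]]]] := Hlev hD0.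
have GL := S2 t0 hD.
exists w, r; split => //.
- apply: (derive_transfer Hw); first by rewrite /extf eqxx.
  near=> s; have s0 : s != 0 by near: s; exact: nbhs_dnbhs_neq.
  have [E _] : G1 (t + s) = u (G1 t * s) (G2 t * s) / s /\ G2 (t + s) = v (G1 t * s) (G2 t * s) / s by near: s; exact: GL.
  by rewrite /extf (negbTE s0) E.
- apply: (derive_transfer Hr); first by rewrite /extf eqxx.
  near=> s; have s0 : s != 0 by near: s; exact: nbhs_dnbhs_neq.
  have [_ E] : G1 (t + s) = u (G1 t * s) (G2 t * s) / s /\ G2 (t + s) = v (G1 t * s) (G2 t * s) / s by near: s; exact: GL.
  by rewrite /extf (negbTE s0) E.
Unshelve. all: by end_near. Qed.

Lemma core_point : exists J, forall m,
  m * x * ev2 Q (m * x) (m * y) = ev2 P (m * x) (m * y) * (1 - m * J) /\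
  m * y * ev2 Q' (m * x) (m * y) = ev2 P' (m * x) (m * y) * (1 - m * J).
Proof.
have [d d0 Hd] := S1.
have [wq [rq [Hwq _]]] := Hlev h0.
have Hrat : forall t, 0 < t < d -> G2 t / G1 t = y / x.
  apply: (const_lim (f := fun t => G2 t / G1 t)).
    move=> t ht; have [g1 g0 g3 _ _] := Hd t ht.
    have t0 : 0 < t by case/andP: ht.
    have [w [r [Hw Hr Hwr _]]] := S3 t0 g0 g3.
    have HD := is_deriveM Hr (is_deriveV g1 Hw).
    apply: is_derive_eq HD _.
    rewrite /GRing.scale /=.
    transitivity ((G1 t * r - G2 t * w) / G1 t ^+ 2); first by field.
    by rewrite Hwr mul0r.
  apply: cvg_dnbhs_right; apply: cvgM => //; exact: cvgV.
have E2 : forall t, 0 < t < d -> G2 t = y / x * G1 t.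
  move=> t ht; have [g1 _ _ _ _] := Hd t ht.
  by rewrite -(Hrat t ht) divfK.
have Hsig : forall t, 0 < t < d -> is_derive t (1:R) G1 ((G1 t / x) ^+ 2 * wq).
  move=> t ht; have [g1 g0 g3 _ _] := Hd t ht; have t0 : 0 < t by case/andP: ht.
  have [w [r [Hw _ _ Hext]]] := S3 t0 g0 g3.
  set sg := G1 t / x.
  have sg0 : sg != 0 by rewrite /sg mulf_neq0 ?invr_eq0.
  have Efun : extf u (G1 t) (G1 t) (G2 t) = (fun s => sg * extf u x x y (sg * s)).
    apply/funext => s; rewrite /extf mulf_eq0 (negbTE sg0) /=.
    case: eqP => [_|/eqP s0]; first by rewrite /sg divfK.
    have -> : x * (sg * s) = G1 t * s by rewrite /sg; fld.
    have -> : y * (sg * s) = G2 t * s by rewrite (E2 t ht) /sg; fld.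
    by fld.
  have Hc : is_derive (sg * 0) (1:R) (extf u x x y) wq by rewrite mulr0.
  have Hl : is_derive (0:R) (1:R) (fun s => sg * s) (sg * 1).
    have := is_deriveZ sg (@is_derive_id _ _ (0:R) (1:R)); exact.
  have Hd2 : is_derive (0:R) (1:R) (fun s => sg * extf u x x y (sg * s)) (sg * (wq * (sg * 1))).
    have := is_deriveZ sg (is_derive1_comp Hc Hl); exact.
  rewrite -Efun in Hd2.
  have Ew := is_derive_uniq Hext Hd2.
  apply: is_derive_eq Hw _; rewrite Ew /sg; fld.
set J := wq / x.
have Hh : forall t, 0 < t < d -> x * (G1 t)^-1 + J * t = 1.
  apply: (const_lim (f := fun t => x * (G1 t)^-1 + J * t)).
    move=> t ht; have [g1 _ _ _ _] := Hd t ht.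
    have H1 := is_deriveZ x (is_deriveV g1 (Hsig t ht)).
    have H2 := is_deriveZ J (@is_derive_id _ _ t (1:R)).
    have HD := is_deriveD H1 H2.
    apply: is_derive_eq HD _.
    rewrite /GRing.scale /= /J; fld.
  have -> : (1:R) = x * x^-1 + J * 0 by rewrite mulr0 addr0 divff.
  apply: cvg_dnbhs_right; apply: cvgD.
    by apply: cvgM; [exact: cvg_cst | exact: cvgV].
  by apply: cvgM; [exact: cvg_cst | exact: cvg_within].
have Ht : forall t, 0 < t < d ->
    t * x * ev2 Q (t * x) (t * y) = ev2 P (t * x) (t * y) * (1 - t * J) /\
    t * y * ev2 Q' (t * x) (t * y) = ev2 P' (t * x) (t * y) * (1 - t * J).
  move=> t ht; have [g1 _ _ q1 q2] := Hd t ht.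
  have tn0 : t != 0 by case/andP: ht => ? _; rewrite gt_eqF.
  have hh := Hh t ht.
  have Ex' : G1 t * (1 - t * J) = x.
    by rewrite -hh (mulrC t J) addrK mulrC divfK.
  have Eu : u (x * t) (y * t) = G1 t * t by rewrite /G1 divfK.
  have Ev : v (x * t) (y * t) = G2 t * t by rewrite /G2 divfK.
  rewrite (Hu q1) in Eu; rewrite (Hv q2) in Ev.
  have EP : ev2 P (x * t) (y * t) = G1 t * t * ev2 Q (x * t) (y * t) by rewrite -Eu divfK.
  have EP' : ev2 P' (x * t) (y * t) = G2 t * t * ev2 Q' (x * t) (y * t) by rewrite -Ev divfK.
  rewrite !(mulrC t x) !(mulrC t y) EP EP' (E2 t ht); split.
    by rewrite -{1}Ex'; ring.
  transitivity (y / x * (G1 t * (1 - t * J)) * t * ev2 Q' (x * t) (y * t)).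
    by rewrite Ex' divfK //; ring.
  by ring.
have EQ : ray Q x y * ('X * x%:P) - ray P x y * (1 - 'X * J%:P) = 0.
  apply: (@poly_vanish _ _ 0); apply: (itv_near_right d0) => t ht.
  rewrite !(hornerD, hornerN, hornerM, hornerX, hornerC) -?polyC1 ?hornerC !rayE; have [A _] := Ht t ht.
  by apply/eqP; rewrite subr_eq0 -A; apply/eqP; ring.
have EQ' : ray Q' x y * ('X * y%:P) - ray P' x y * (1 - 'X * J%:P) = 0.
  apply: (@poly_vanish _ _ 0); apply: (itv_near_right d0) => t ht.
  rewrite !(hornerD, hornerN, hornerM, hornerX, hornerC) -?polyC1 ?hornerC !rayE; have [_ A] := Ht t ht.
  by apply/eqP; rewrite subr_eq0 -A; apply/eqP; ring.
exists J => m; split.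
  have := congr1 (horner^~ m) EQ; rewrite !(hornerD, hornerN, hornerM, hornerX, hornerC) -?polyC1 ?hornerC !rayE => /eqP.
  by rewrite subr_eq0 mulrC => /eqP.
have := congr1 (horner^~ m) EQ'; rewrite !(hornerD, hornerN, hornerM, hornerX, hornerC) -?polyC1 ?hornerC !rayE => /eqP.
by rewrite subr_eq0 mulrC => /eqP.
Qed.

End Point.
End Core.


Section Alg.
Variable R : realType.
Lemma alg1 (a Qv Pv K : R) : a != 0 -> Qv != 0 -> a * Qv = Pv * K ->
  [/\ K != 0, Pv != 0 & Pv / Qv = a / K].
Proof.
move=> a0 q0 E.
have K0 : K != 0 by apply/eqP => K0; move: E; rewrite K0 mulr0 => /eqP; rewrite mulf_eq0 (negbTE a0) (negbTE q0).
have P0 : Pv != 0 by apply/eqP => P0; move: E; rewrite P0 mul0r => /eqP; rewrite mulf_eq0 (negbTE a0) (negbTE q0).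
split => //; apply/eqP; rewrite eqr_div // -E mulrC eqxx //.
Qed.

Lemma alg2 (a Qv Pv K : R) : Qv != 0 -> K != 0 -> a * Qv = Pv * K -> Pv / Qv = a / K.
Proof. by move=> q0 K0 E; apply/eqP; rewrite eqr_div // -E mulrC. Qed.
End Alg.

Section Main.
Variable R : realType.
Variables (u v : R -> R -> R) (P Q P' Q' Dc Di : {poly {poly R}}).
Hypothesis Hu : forall x y, ev2 Q x y != 0 -> u x y = ev2 P x y / ev2 Q x y.
Hypothesis Hv : forall x y, ev2 Q' x y != 0 -> v x y = ev2 P' x y / ev2 Q' x y.
Hypothesis Hcore : forall x y, ev2 Dc x y != 0 -> x != 0 /\ exists J, forall m,
  m * x * ev2 Q (m * x) (m * y) = ev2 P (m * x) (m * y) * (1 - m * J) /\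
  m * y * ev2 Q' (m * x) (m * y) = ev2 P' (m * x) (m * y) * (1 - m * J).
Hypothesis DcQ : forall x y, ev2 Dc x y != 0 -> ev2 Q x y != 0 /\ ev2 Q' x y != 0.
Hypothesis Hi : forall x y, ev2 Di x y != 0 ->
   (v (y ^+ 2 / x) y) ^+ 2 / u (y ^+ 2 / x) y = u x y /\ v (y ^+ 2 / x) y = v x y.
Hypotheses (Dc0 : Dc != 0) (Di0 : Di != 0).

Lemma pt x y : ev2 Dc x y != 0 -> exists J, x != 0 /\
  (forall m, m != 0 -> ev2 Q (m * x) (m * y) != 0 ->
     [/\ 1 - m * J != 0, ev2 P (m * x) (m * y) != 0 & u (m * x) (m * y) = m * x / (1 - m * J)]) /\
  (forall m, m != 0 -> ev2 Q (m * x) (m * y) != 0 -> ev2 Q' (m * x) (m * y) != 0 ->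
     v (m * x) (m * y) = m * y / (1 - m * J)).
Proof.
move=> hD; have [x0 [J HJ]] := Hcore hD; exists J; split => //; split.
  move=> m m0 q0; have [A _] := HJ m.
  have [K0 P0 E] := alg1 (mulf_neq0 m0 x0) q0 A.
  by split => //; rewrite Hu.
move=> m m0 q0 q0'; have [A B] := HJ m.
have [K0 _ _] := alg1 (mulf_neq0 m0 x0) q0 A.
by rewrite Hv //; apply: alg2.
Qed.

Let E := Dc * Di * 'X.

Lemma E0 : E != 0.
Proof. by rewrite /E !mulf_neq0 // polyX_eq0. Qed.

Lemma Esplit x y : ev2 E x y != 0 -> [/\ ev2 Dc x y != 0, ev2 Di x y != 0 & y != 0].
Proof. by rewrite /E !ev2M ev2X !mulf_eq0 !negb_or => /andP[/andP[-> ->] ->]. Qed.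

Definition linp (S : {poly {poly R}}) (l : R) : {poly R} := (S.[l%:P]) \Po (l *: 'X).

Lemma linpE S l t : (linp S l).[t] = ev2 S (l * t) l.
Proof. by rewrite /linp horner_comp hornerZ hornerX. Qed.

Definition rr (l : R) (t : R) : R := (1 - t * l / u (t * l) l) / l.

Lemma rr_line l t : l != 0 -> ev2 Dc (l * t) l != 0 -> exists J,
  [/\ ev2 P (l * t) l != 0, ev2 Q (l * t) l != 0, rr l t = J / l,
      v (l * t) l = l / (1 - J) /\ 1 - J != 0 & t != 0].
Proof.
move=> l0 hD; have [q0 q0'] := DcQ hD.
have [J [x0 [Hu1 Hv1]]] := pt hD; exists J.
have t0 : t != 0 by apply: contra x0 => /eqP ->; rewrite mulr0.
have q1 : ev2 Q (1 * (l * t)) (1 * l) != 0 by rewrite !mul1r.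
have [K0 P0 Eu] := Hu1 1 (oner_neq0 _) q1.
have q1' : ev2 Q' (1 * (l * t)) (1 * l) != 0 by rewrite !mul1r.
have := Hv1 1 (oner_neq0 _) q1 q1'; rewrite !mul1r => Ev.
rewrite !mul1r in K0 P0 Eu.
split => //.
rewrite /rr (mulrC t l) Eu; fld.
Qed.

Lemma main_r : exists r : R -> R,
    rational1 r /\
    generic1 (fun t => r t = r t^-1) /\
    generic2 (fun x y =>
      u x y = x / (1 - y * r (x / y)) /\
      v x y = y / (1 - y * r (x / y))).
Proof.
have [x1 [l hE]] := poly2_ex_nz E0.
have [_ _ l0] := Esplit hE.
set e1 := linp E l.
have e10 : e1 != 0.
  apply/eqP => e0; move: hE; have := linpE E l (x1 / l).
  by rewrite -/e1 e0 horner0 (mulrC l) divfK // => <-; rewrite eqxx.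
have [t0 [t0gt He1 He2]] : exists t0, [/\ 1 < t0, e1.[t0] != 0 & e1.[t0^-1] != 0].
  have Hn := poly_nz_near 1 e10.
  have Hinv : (fun t : R => t^-1) @ (1:R) --> (1:R).
    have : (fun t : R => t^-1) @ (1:R) --> (1:R)^-1 by apply: cvgV; [exact: oner_neq0 | exact: cvg_id].
    by rewrite invr1.
  have H1 := dnbhs_right Hn.
  have H2 : \forall t \near 1^'+, e1.[t^-1] != 0.
    rewrite near_withinE in Hn.
    have H2' : \forall t \near (1:R), t^-1 != 1 -> e1.[t^-1] != 0 by exact: (Hinv _ Hn).
    near=> t.
    have t1 : 1 < t by near: t; exact: nbhs_right_gt.
    have : t^-1 != 1 -> e1.[t^-1] != 0 by near: t; apply: cvg_within; exact: H2'.
    by apply; rewrite invr_eq1 gt_eqF.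
  have H3 := nbhs_right_gt (1:R).
  have [t [a [b c]]] := filter_ex (filterI H3 (filterI H1 H2)).
  by exists t.
have t00 : t0 != 0 by rewrite gt_eqF // (lt_trans ltr01).
have g0 : ev2 E (l * t0) l != 0 by rewrite -linpE.
have g1 : ev2 E (l * t0^-1) l != 0 by rewrite -linpE.
set Pl := linp P l; set Ql := linp Q l.
set A := (Pl - (l *: 'X) * Ql) * Ql; set B := l%:P * Pl * Ql.
have Hrat : forall t, B.[t] != 0 -> rr l t = A.[t] / B.[t].
  move=> t; rewrite /B !hornerM hornerC !mulf_eq0 !negb_or => /andP[/andP[_ p0] q0].
  rewrite /rr /A !(hornerM, hornerD, hornerN, hornerZ, hornerX) /Pl /Ql !linpE in p0 q0 *.
  rewrite (mulrC t l) Hu //; fld.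
have Bt : forall t, ev2 Dc (l * t) l != 0 -> B.[t] != 0.
  move=> t hD; have [J [p0 q0 _ _ _]] := rr_line l0 hD.
  by rewrite /B !hornerM hornerC /Pl /Ql !linpE !mulf_neq0.
have [Dt0 _ _] := Esplit g0.
have B0 : B != 0 by apply/eqP => B0; move: (Bt t0 Dt0); rewrite B0 horner0 eqxx.
set N := maxn (size A) (size B).
have sA : (size A <= N)%N by rewrite leq_maxl.
have sB : (size B <= N)%N by rewrite leq_maxr.
have Hnear : \forall t \near t0, ev2 E (l * t) l != 0 /\ ev2 E (l * t^-1) l != 0.
  have c1 : \forall t \near (t0 : R), e1.[t] != 0.
    by have := @cvgr_neq0 _ _ _ _ _ (horner e1) _ (@continuous_horner _ e1 t0) He1; exact.
  have lim2 : (fun t => e1.[t^-1]) @ t0 --> e1.[t0^-1].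
    apply: (continuous_cvg _ (@continuous_horner _ e1 _)).
    by apply: cvgV => //; exact: cvg_id.
  have c2 : \forall t \near (t0 : R), e1.[t^-1] != 0.
    by have := @cvgr_neq0 _ _ _ _ _ (fun t => e1.[t^-1]) _ lim2 He2; exact.
  by apply: filterS (filterI c1 c2) => t [/= h1 h2]; rewrite -!linpE.
have Hsym : \forall t \near t0, A.[t] * (revp N B).[t] = (revp N A).[t] * B.[t].
  apply: filterS Hnear => t [h1 h2].
  have [d1 i1 _] := Esplit h1; have [d2 _ _] := Esplit h2.
  have [J1 [p1 q1 r1 [v1 K1] tn0]] := rr_line l0 d1.
  have [J2 [p2 q2 r2 [v2 K2] _]] := rr_line l0 d2.
  have [_ Ei] := Hi i1.
  have e : l ^+ 2 / (l * t) = l * t^-1 by fld.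
  rewrite e v1 v2 in Ei.
  have EJ : J2 = J1.
    move/(congr1 (fun w => l^-1 * w)): Ei; rewrite !mulKf // => /invr_inj /eqP.
    by rewrite -subr_eq0 opprB addrC addrA subrK subr_eq0 => /eqP.
  have b1 := Bt t d1; have b2 := Bt t^-1 d2.
  have Er : rr l t = rr l t^-1 by rewrite r1 r2 EJ.
  move: Er; rewrite !Hrat // => /eqP; rewrite eqr_div // => /eqP E1.
  by rewrite !revpE // mulrCA E1 mulrA.
have Ep : A * revp N B - revp N A * B = 0.
  apply: (@poly_vanish _ _ t0); apply: cvg_within; apply: filterS Hsym => t Ht.
  by rewrite hornerD hornerN (hornerM A) (hornerM (revp N A)) Ht subrr.
have [Dt0' _ _] := Esplit g1.
have gen1 : generic1 (fun t => rr l t = rr l t^-1).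
  exists ('X * B * revp N B); split.
    apply: mulf_neq0; first by rewrite mulf_neq0 ?polyX_eq0.
    apply/eqP => rB.
    move: (congr1 (horner^~ t0) rB) => /=; rewrite revpE // horner0 => /eqP.
    by rewrite mulf_eq0 expf_eq0 (negbTE t00) andbF /= (negbTE (Bt _ Dt0')).
  move=> t; rewrite (hornerM _ (revp N B)) (hornerM 'X B) hornerX !mulf_eq0 !negb_or => /andP[/andP[tn0 b1] rb].
  rewrite revpE // mulf_eq0 negb_or expf_eq0 (negbTE tn0) andbF /= in rb.
  rewrite !Hrat //; apply/eqP; rewrite eqr_div //; apply/eqP.
  move: (congr1 (horner^~ t) Ep) => /=; rewrite hornerD hornerN (hornerM A) (hornerM (revp N A)) !revpE // horner0.
  move/eqP; rewrite subr_eq0 => /eqP E1.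
  apply: (mulfI (expf_neq0 N tn0)); by rewrite mulrCA E1 mulrA.
set N2 := size Ql.
have gen2 : generic2 (fun x y =>
      u x y = x / (1 - y * rr l (x / y)) /\
      v x y = y / (1 - y * rr l (x / y))).
  exists (Dc * 'X * hom N2 Ql); split.
    apply/eqP => D0; move: (congr1 (fun S => ev2 S (l * t0) l) D0) => /=.
    have [J [_ q0 _ _ _]] := rr_line l0 Dt0.
    have -> : ev2 (0 : {poly {poly R}}) (l * t0) l = 0 by rewrite /ev2 !horner0.
    apply/eqP; rewrite !ev2M ev2X homE // (mulrC l t0) mulfK // /Ql linpE (mulrC t0 l).
    by rewrite !mulf_neq0 // expf_neq0.
  move=> x y; rewrite !ev2M ev2X !mulf_eq0 !negb_or => /andP[/andP[hD y0] hh].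
  have [J [x0 [Hu1 Hv1]]] := pt hD.
  have [q0 q0'] := DcQ hD.
  rewrite homE // mulf_eq0 negb_or expf_eq0 (negbTE y0) andbF /= /Ql linpE in hh.
  have m0 : l / y != 0 by rewrite mulf_neq0 ?invr_eq0.
  have ex : l / y * x = l * (x / y) by fld.
  have ey : l / y * y = l by fld.
  have hq : ev2 Q (l / y * x) (l / y * y) != 0 by rewrite ex ey.
  have [Km _ Eum] := Hu1 (l / y) m0 hq.
  rewrite ex ey in Eum.
  have Ey : y * rr l (x / y) = J.
    rewrite /rr (mulrC (x / y) l) Eum; fld.
    have -> : y - l * J = y * (1 - l / y * J) by fld.
    by rewrite mulf_neq0.
  have q1 : ev2 Q (1 * x) (1 * y) != 0 by rewrite !mul1r.
  have q1' : ev2 Q' (1 * x) (1 * y) != 0 by rewrite !mul1r.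
  have [_ _ Eu1] := Hu1 1 (oner_neq0 _) q1.
  have Ev1 := Hv1 1 (oner_neq0 _) q1 q1'.
  rewrite !mul1r in Eu1 Ev1.
  by rewrite Ey Eu1 Ev1.
exists (rr l); split.
  by exists A, B; split => // t; exact: Hrat.
by split.
Unshelve. all: by end_near. Qed.

End Main.

End Helpers.
Import Helpers.

Theorem proposition5 (R : realType) (u v : R -> R -> R) :
  rational_flow u v -> level0 u v -> i_symmetric u v ->
  exists r : R -> R,
    rational1 r /\
    generic1 (fun t => r t = r t^-1) /\
    generic2 (fun x y =>
      u x y = x / (1 - y * r (x / y)) /\
      v x y = y / (1 - y * r (x / y))).
Proof.
move=> [[P [Q [Q0 Hu]]] [[P' [Q' [Q0' Hv]]] [[D3 [D30 Hfl]] [DL [DL0 Hlim]]]]].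
move=> [D0 [D00 Hlev]] [Di [Di0 Hi]].
have [m [D3q /implyP/(_ D30) nr E3]] := multiplicity_XsubC D3 1.
have D3r0 : D3q.[1] != 0 by exact: nr.
have Hflow : forall x y z, z != 1 -> ev3 D3q x y z != 0 ->
    let a := u (x * z) (y * z) * (1 - z) / z in
    let b := v (x * z) (y * z) * (1 - z) / z in
    (1 - z) * u x y = u a b /\ (1 - z) * v x y = v a b.
  move=> x y z z1 hz; apply: Hfl.
  by rewrite E3 ev3M ev3_exp ev3_XsubC1 mulf_neq0 // expf_neq0 // subr_eq0.
pose Dc := 'X%:P * DL * D0 * D3q.[1] * Q * Q'.
have Dc0 : Dc != 0 by rewrite /Dc !mulf_neq0 // polyC_eq0 polyX_eq0.
have Dsplit : forall x y, ev2 Dc x y != 0 ->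
    [/\ x != 0, ev2 DL x y != 0, ev2 D0 x y != 0, ev2 D3q.[1] x y != 0 &
        ev2 Q x y != 0 /\ ev2 Q' x y != 0].
  move=> x y; rewrite /Dc !ev2M ev2Xi !mulf_eq0 !negb_or.
  by move=> /andP[/andP[/andP[/andP[/andP[-> ->] ->] ->] ->] ->].
apply: (@main_r R u v P Q P' Q' Dc Di Hu Hv _ _ Hi Dc0 Di0).
  move=> x y /Dsplit [x0 hL h0 h3 [hQ hQ']]; split => //.
  exact: (core_point Hu Hv Hflow Hlim Hlev x0 hL h0 h3 hQ hQ').
by move=> x y /Dsplit [_ _ _ _ []].
Qed.
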